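(* Let $\mathcal{P}\subseteq\mathbb{Z}_{\geq0}$ with $0\in\mathcal{P}$, working with formal power series over a commutative ring $R\supseteq\mathbb{Q}$. Then for every $n\ge0$, $$[z^n]\,P^\mathcal{P}(z) = [z^{n}]\,e_\mathcal{P}(z)^n e^z.$$
   Context: $[n]=\{1,\dots,n\}$; $[z^n]g$ is the coefficient of $z^n$. $e_\mathcal{P}(z)=\sum_{n\in\mathcal{P}}z^n/n!$ and $e^z=\sum_{n\ge0}z^n/n!$. $P^\mathcal{P}(z)=\sum_{n\ge0}p_nz^n/n!$, where $p_n$ is the number of partial functions $f$ on $[n]$ (maps from some subset $S\subseteq[n]$ into $[n]$) with $|f^{-1}(x)|\in\mathcal{P}$ for every $x\in[n]$. *)

(* Defs.v *)
From mathcomp Require Import all_boot all_order all_algebra.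
Set Implicit Arguments. Unset Strict Implicit. Unset Printing Implicit Defensive.
Import GRing.Theory.
Local Open Scope ring_scope.

Definition fps (R : Type) := nat -> R.

Section FPS.
Variable R : comUnitRingType.

Definition fps_one : fps R := fun n => (n == 0%N)%:R.

Definition fps_mul (f g : fps R) : fps R :=
  fun n => \sum_(i < n.+1) f i * g (n - i)%N.

Definition fps_exp (f : fps R) (k : nat) : fps R := iter k (fps_mul f) fps_one.

Definition e_set (P : pred nat) : fps R :=
  fun n => if P n then (n`!%:R)^-1 else 0.

Definition e_exp : fps R := fun n => (n`!%:R)^-1.
End FPS.

(* p_n : the number of partial functions f on [n] (a map from a subset S of [n]
   into [n], encoded as a total map [n] -> option [n], None meaning "undefined")
   such that |f^{-1}(x)| lies in P for every x in [n]. *)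
Definition p_count (P : pred nat) (n : nat) : nat :=
  #|[set f : {ffun 'I_n -> option 'I_n} |
      [forall x : 'I_n, P #|[set i : 'I_n | f i == Some x]| ]]|.

(* Main.v *)
Require Import Defs.
From mathcomp Require Import all_boot all_order all_algebra.
Import GRing.Theory.
Set Implicit Arguments. Unset Strict Implicit.
Local Open Scope ring_scope.

Section Assoc.
Variable R : comUnitRingType.

Definition trp (f : fps R) (n : nat) : {poly R} := \poly_(i < n.+1) f i.

Lemma fps_mul_tr (f g : fps R) m n : (m <= n)%N ->
  fps_mul f g m = (trp f n * trp g n)`_m.
Proof.
move=> mn; rewrite coefM /fps_mul; apply: eq_bigr => i _.
rewrite /trp !coef_poly.
have ->: (i < n.+1)%N by apply: leq_trans (ltn_ord i) _.
by have ->: (m - i < n.+1)%N by rewrite ltnS (leq_trans (leq_subr _ _)).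
Qed.

Lemma fps_mulA (a b c : fps R) n :
  fps_mul (fps_mul a b) c n = fps_mul a (fps_mul b c) n.
Proof.
have -> : fps_mul (fps_mul a b) c n = ((trp a n * trp b n) * trp c n)`_n.
  rewrite coefM /fps_mul; apply: eq_bigr => i _.
  rewrite -/(fps_mul a b i) (@fps_mul_tr a b i n (ltnSE (ltn_ord i))) /trp coef_poly.
  by rewrite ltnS leq_subr.
have -> : fps_mul a (fps_mul b c) n = (trp a n * (trp b n * trp c n))`_n.
  rewrite coefM /fps_mul; apply: eq_bigr => i _.
  rewrite -(@fps_mul_tr b c (n - i) n (leq_subr i n)) /trp coef_poly ltn_ord.
  by [].
by rewrite mulrA.
Qed.
End Assoc.

Section Comb.
Variable T : finType.
Variable P : pred nat.

Definition fib k (f : {ffun T -> option 'I_k}) (x : 'I_k) := [set i | f i == Some x].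
Definition okf (D : {set T}) k (f : {ffun T -> option 'I_k}) : bool :=
  [forall i, (i \notin D) ==> (f i == None)] && [forall x, P #|fib f x|].
Definition NN D k := #|[set f | okf (k:=k) D f]|.

Lemma NN0 D : NN D 0 = 1%N.
Proof.
rewrite /NN; suff -> : [set f | okf (k:=0) D f] = [set [ffun=> None]] by rewrite cards1.
apply/setP => f; rewrite !inE.
have fN : f = [ffun=> None].
  by apply/ffunP => i; rewrite ffunE; case: (f i) => [[x hx]|].
subst f; rewrite eqxx; apply/andP; split; first by apply/forallP => i; rewrite ffunE eqxx implybT.
by apply/forallP => -[x hx].
Qed.

Definition Fm k (S : {set T}) (g : {ffun T -> option 'I_k}) : {ffun T -> option 'I_k.+1} :=
  [ffun i => if i \in S then Some ord_max else omap (lift ord_max) (g i)].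

Lemma NNS D k : NN D k.+1 = (\sum_(S : {set T} | (S \subset D) && P #|S|) NN (D :\: S) k)%N.
Proof.
rewrite /NN -sum1_card (partition_big (fun f : {ffun T -> option 'I_k.+1} => fib f ord_max) (fun S : {set T} => (S \subset D) && P #|S|)).
  apply: eq_bigr => S /andP[SD PS].
  rewrite sum1dep_card.
  have -> : [set x | (x \in [set f | okf (k:=k.+1) D f]) && (fib x ord_max == S)] =
            Fm S @: [set g | okf (k:=k) (D :\: S) g].
    apply/setP => f; rewrite !inE; apply/idP/idP.
    - case/andP => /andP[/forallP fD /forallP fP] /eqP fS.
      apply/imsetP; exists [ffun i => obind (unlift ord_max) (f i)].
        rewrite inE; apply/andP; split.
          apply/forallP => i; apply/implyP; rewrite inE negb_and negbK ffunE.
          case/orP => [iS|iD].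
            by move: iS; rewrite -fS inE => /eqP ->; rewrite /= unlift_none.
          by have := fD i; rewrite iD /= => /eqP ->.
        apply/forallP => y.
        suff -> : fib [ffun i => obind (unlift ord_max) (f i)] y = fib f (lift ord_max y) by [].
        apply/setP => i; rewrite !inE ffunE.
        case: (f i) => [x|] //=.
        case: unliftP => [z ->|->] /=.
          by rewrite !(inj_eq (@Some_inj _)) (inj_eq (@lift_inj _ _)).
        by apply/esym/negbTE; rewrite (inj_eq (@Some_inj _)) neq_lift.
      apply/ffunP => i; rewrite !ffunE.
      case: ifP => iS.
        by move: iS; rewrite -fS inE => /eqP ->.
      move: iS; rewrite -fS inE.
      case: (f i) => [x|] //= hx.
      case: unliftP => [z ->|xe] //=.
      by move: hx; rewrite xe eqxx.
    - case/imsetP => g; rewrite inE => /andP[/forallP gD /forallP gP] ->.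
      have gS : forall i, i \in S -> g i = None.
        move=> i iS; apply/eqP; have := gD i; rewrite inE iS /=; exact.
      have fibS : fib (Fm S g) ord_max = S.
        apply/setP => i; rewrite !inE ffunE; case: ifP => iS; first by rewrite eqxx.
        case: (g i) => [x|] //=; rewrite (inj_eq (@Some_inj _)). by apply/negbTE; rewrite eq_sym neq_lift.
      rewrite fibS eqxx andbT; apply/andP; split.
        apply/forallP => i; apply/implyP => iD; rewrite ffunE.
        have iS : (i \in S) = false by apply/negbTE; apply: contra iD; apply/subsetP.
        rewrite iS; have := gD i; rewrite inE iS iD /= => /eqP -> //.
      apply/forallP => x.
      case: (unliftP ord_max x) => [y ->|->]; last by rewrite fibS.
      suff -> : fib (Fm S g) (lift ord_max y) = fib g y by [].
      apply/setP => i; rewrite !inE ffunE; case: ifP => iS.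
        rewrite gS // /=; apply/negbTE; rewrite (inj_eq (@Some_inj _)) neq_lift //.
      by case: (g i) => [z|] //=; rewrite !(inj_eq (@Some_inj _)) (inj_eq (@lift_inj _ _)).
  rewrite card_in_imset //.
  move=> g1 g2; rewrite !inE => /andP[/forallP g1D _] /andP[/forallP g2D _] /ffunP e.
  apply/ffunP => i; have := e i; rewrite !ffunE.
  case: ifP => iS.
    move=> _; have := g1D i; have := g2D i; rewrite inE iS /= => /eqP -> /eqP -> //.
  by case: (g1 i) => [a|]; case: (g2 i) => [b|] //= /Some_inj /lift_inj ->.
move=> f; rewrite inE => /andP[/forallP fD /forallP fP]; rewrite fP andbT.
apply/subsetP => i; rewrite inE; apply: contraTT => iD.
by have := fD i; rewrite iD /= => /eqP ->.
Qed.
End Comb.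

Section Main.
Variable R : comUnitRingType.
Hypothesis HQ : forall k : nat, (k.+1)%:R \is a @GRing.unit R.
Variable P : pred nat.

Definition cc k := fps_mul (fps_exp (e_set R P) k) (e_exp R).

Lemma factU m : (m`!)%:R \is a @GRing.unit R.
Proof. by have := HQ (m`!).-1; rewrite prednK ?fact_gt0. Qed.

Lemma c0 d : fps_mul (fps_one R) (e_exp R) d = (d`!%:R)^-1.
Proof.
rewrite /fps_mul big_ord_recl /fps_one /e_exp /= subn0 mul1r big1 ?addr0 // => i _.
by rewrite /= /bump leq0n add1n mul0r.
Qed.

Lemma Nval (T : finType) (D : {set T}) k :
  (NN P D k)%:R = (#|D|`!)%:R * cc k #|D| :> R.
Proof.
elim: k D => [|k IH] D.
  by rewrite NN0 /cc /fps_exp /= c0 divrr ?factU.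
rewrite NNS natr_sum.
under eq_bigr => S /andP[SD _] do rewrite IH cardsD (setIidPr SD).
set d := #|D|.
rewrite big_mkcondr /=.
rewrite (partition_big (fun S : {set T} => (inord #|S| : 'I_d.+1)) predT) //=.
rewrite /cc /fps_exp iterS fps_mulA -/(fps_exp _ k) -/(cc k).
have E : fps_mul (e_set R P) (cc k) d = \sum_(j < d.+1) e_set R P j * cc k (d - j)%N.
  by [].
rewrite E.
rewrite mulr_sumr; apply: eq_bigr => j _.
rewrite (eq_big (fun S : {set T} => (S \subset D) && (#|S| == j))
                (fun _ => if P j then (d - j)`!%:R * cc k (d - j)%N else 0)); first last.
- move=> S /andP[SD /eqP <-]; rewrite inordK // ltnS subset_leq_card //.
- move=> S; case SD: (S \subset D) => //=.
  by rewrite -val_eqE /= inordK // ltnS subset_leq_card.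
rewrite sumr_const.
have -> : #|(fun i : {set T} => (i \subset D) && (#|i| == j))| = 'C(d, j).
  by rewrite -cards_draws; apply: eq_card => S; rewrite inE.
rewrite /e_set; case: ifP => Pj; last by rewrite mul0rn mul0r mulr0.
rewrite -[_ *+ 'C(d, j)]mulr_natl -(bin_fact (ltnSE (ltn_ord j))) !natrM.
by rewrite (mulrC (j`!)%:R) !mulrA mulrK ?factU.
Qed.
End Main.

Theorem corollary5p13 (R : comUnitRingType)
    (HQ : forall k : nat, (k.+1)%:R \is a @GRing.unit R)
    (P : pred nat) (P0 : P 0%N) (n : nat) :
  (p_count P n)%:R / (n`!)%:R = fps_mul (fps_exp (e_set R P) n) (e_exp R) n.
Proof.
have -> : p_count P n = NN P [set: 'I_n] n.
  rewrite /p_count /NN; apply: eq_card => f; rewrite !inE /okf.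
  have -> // : [forall i, (i \notin [set: 'I_n]) ==> (f i == None)].
  by apply/forallP => i; rewrite inE.
rewrite (Nval HQ) cardsT card_ord mulrC mulKr ?factU //.
Qed.
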